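(* Let $n>k$ and let $\mathcal{S}$ be a set of $k$-spaces in $\mathrm{AG}(n,q)$ pairwise intersecting in a $(k-1)$-space such that $\mathcal{S}$ is not a $(k-1)$-pencil. Then $|\mathcal{S}|\leq\theta_k$, and equality holds if and only if there exist an affine $(k+1)$-space $\Gamma$ and $\mathcal{S}$ is a maximal set of $\theta_k$ affine $k$-spaces in $\Gamma$ such that $\tilde\sigma_1\cap H_\infty\neq\tilde\sigma_2\cap H_\infty$ for all distinct $\sigma_1,\sigma_2\in\mathcal{S}$. Moreover, all elements of $\mathcal{S}$ are contained in an affine $(k+1)$-space.
   Context: $\mathrm{AG}(n,q)$ is viewed as $\mathrm{PG}(n,q)$ minus a hyperplane $H_\infty$; for an affine subspace $\alpha$, $\tilde\alpha$ denotes its projective closure. Affine subspaces intersect in a $(k-1)$-space if their affine intersection is an affine $(k-1)$-space. $\theta_k=\frac{q^{k+1}-1}{q-1}$. A $(k-1)$-pencil is the set of all affine $k$-spaces containing a fixed affine $(k-1)$-space. *)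

(* Defs.v *)
(* AG(n,q) modelled as the vector space 'rV[F]_n over a
   finite field F with q = #|F| elements. *)
From HB Require Import structures.
From mathcomp Require Import all_boot all_order all_algebra.
Set Implicit Arguments. Unset Strict Implicit. Unset Printing Implicit Defensive.
Import GRing.Theory.
Local Open Scope ring_scope.

Section AffGeom.
Variables (F : finFieldType) (n : nat).
Local Notation pt := 'rV[F]_n.

(* A is an affine k-space: a coset v + U of a k-dimensional subspace U
   (U given as the row space of a square matrix). *)
Definition is_aff (k : nat) (A : {set pt}) : Prop :=
  exists (v : pt) (U : 'M[F]_n),
    \rank U = k /\ A = [set x : pt | (x - v <= U)%MS].

(* The points at infinity of an affine subspace A, i.e. the points of
   the projective closure of A lying in H_infty: the directions
   (1-dimensional subspaces, in canonical form <<_>>) of lines of A. *)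
Definition inf_part (A : {set pt}) : {set 'M[F]_n} :=
  [set (<<x - y>>)%MS | x in A, y in A & x != y].

Definition in_pencil (k : nat) (S : {set {set pt}}) : Prop :=
  exists P : {set pt}, is_aff k.-1 P /\ forall s, s \in S -> P \subset s.

Definition pairwise_meet (k : nat) (S : {set {set pt}}) : Prop :=
  forall s1 s2, s1 \in S -> s2 \in S -> s1 != s2 -> is_aff k.-1 (s1 :&: s2).

Definition max_distinct_inf (k : nat) (Gam : {set pt}) (S : {set {set pt}}) : Prop :=
  [/\ forall s, s \in S -> is_aff k s /\ s \subset Gam,
      forall s1 s2, s1 \in S -> s2 \in S -> s1 != s2 -> inf_part s1 != inf_part s2
    & forall t, is_aff k t -> t \subset Gam -> t \notin S ->
        exists2 s, s \in S & inf_part s = inf_part t].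
End AffGeom.

Definition theta (q k : nat) : nat := ((q ^ k.+1 - 1) %/ (q - 1))%N.

(* Main.v *)
Require Import Defs.
From mathcomp Require Import all_boot all_order all_algebra.
Set Implicit Arguments. Unset Strict Implicit. Unset Printing Implicit Defensive.
Import GRing.Theory.
Local Open Scope ring_scope.

Section Aff.
Variables (F : finFieldType) (n : nat).
Local Notation pt := 'rV[F]_n.

Definition aff (v : pt) (U : 'M[F]_n) : {set pt} := [set x : pt | (x - v <= U)%MS].

Lemma mem_aff v U x : (x \in aff v U) = (x - v <= U)%MS.
Proof. by rewrite inE. Qed.

Lemma subv_sub m (C : 'M[F]_(m, n)) (a b : pt) :
  (a <= C)%MS -> (b <= C)%MS -> (a - b <= C)%MS.
Proof. move=> ha hb; apply: (addmx_sub ha); by rewrite eqmx_opp. Qed.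

Lemma addv_sub m (C : 'M[F]_(m, n)) (a b : pt) :
  (a <= C)%MS -> (b <= C)%MS -> ((a + b)%R <= C)%MS.
Proof. by move=> ha hb; apply: (addmx_sub ha). Qed.

Lemma aff_self v U : v \in aff v U.
Proof. by rewrite mem_aff subrr sub0mx. Qed.

Lemma aff_re v U w : w \in aff v U -> aff v U = aff w U.
Proof.
rewrite mem_aff => hw; apply/setP => x; rewrite !mem_aff.
apply/idP/idP => h.
- by have := subv_sub h hw; rewrite opprB addrA subrK.
- by have := addv_sub h hw; rewrite addrA subrK.
Qed.

Lemma aff_subset v U w U' :
  aff v U \subset aff w U' -> (U <= U')%MS /\ v \in aff w U'.
Proof.
move=> /subsetP h; have hv := h _ (aff_self v U); split => //.
apply/row_subP => i.
have : v + row i U \in aff v U by rewrite mem_aff addrC addKr row_sub.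
move/h; rewrite !mem_aff => h2; move: hv; rewrite mem_aff => hv.
by have := subv_sub h2 hv; rewrite opprB addrA subrK addrC addKr.
Qed.

Lemma aff_subsetW v U w U' :
  (U <= U')%MS -> v \in aff w U' -> aff v U \subset aff w U'.
Proof.
move=> hU hv; rewrite (aff_re hv); apply/subsetP => x; rewrite !mem_aff => hx.
exact: submx_trans hx hU.
Qed.

Lemma aff_eq v U w U' : aff v U = aff w U' -> (U == U')%MS.
Proof.
move=> e; have h1 : aff v U \subset aff w U' by rewrite e.
have h2 : aff w U' \subset aff v U by rewrite e.
by have [-> _] := aff_subset h1; have [-> _] := aff_subset h2.
Qed.

Lemma aff_cap v U U' : aff v U :&: aff v U' = aff v (U :&: U')%MS.
Proof. by apply/setP => x; rewrite !inE sub_capmx. Qed.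

End Aff.

Section Inf.
Variables (F : finFieldType) (n : nat).
Local Notation pt := 'rV[F]_n.

Lemma mem_inf_part (v : pt) U Y : Y \in inf_part (aff v U) <->
  exists u : pt, [/\ (u <= U)%MS, u != 0 & Y = <<u>>%MS].
Proof.
split.
- case/imset2P => x y hx; rewrite inE => /andP [hy hxy] ->.
  exists (x - y); split; last by [].
  + by move: hx hy; rewrite !mem_aff => hx hy; have := subv_sub hx hy; rewrite opprB addrA subrK.
  + by rewrite subr_eq0.
- case=> u [hu hu0 ->]; apply/imset2P; exists (v + u) v.
  + by rewrite mem_aff addrC addKr.
  + by rewrite inE aff_self /= -subr_eq0 addrC addKr.
  + by rewrite addrC addKr.
Qed.

Lemma inf_part_eqmx (v w : pt) U U' : (U == U')%MS -> inf_part (aff v U) = inf_part (aff w U').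
Proof.
move=> /andP [h1 h2]; apply/setP => Y; apply/idP/idP.
- move/mem_inf_part => [u [hu hu0 ->]]; apply/mem_inf_part; exists u; split => //.
  exact: submx_trans hu h1.
- move/mem_inf_part => [u [hu hu0 ->]]; apply/mem_inf_part; exists u; split => //.
  exact: submx_trans hu h2.
Qed.

Lemma inf_part_sub (v w : pt) U U' : inf_part (aff v U) = inf_part (aff w U') -> (U <= U')%MS.
Proof.
move=> e; apply/row_subP => i.
have [->|nz] := eqVneq (row i U) 0; first exact: sub0mx.
have : <<row i U>>%MS \in inf_part (aff v U) by apply/mem_inf_part; exists (row i U); split => //; exact: row_sub.
rewrite e => /mem_inf_part [u [hu _ /genmxP /andP [h _]]].
exact: submx_trans h hu.
Qed.

Lemma inf_part_eqE (v w : pt) U U' : (inf_part (aff v U) == inf_part (aff w U')) = (U == U')%MS.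
Proof.
apply/eqP/idP; last exact: inf_part_eqmx.
by move=> e; apply/andP; split; [exact: (inf_part_sub e) | exact: (inf_part_sub (esym e))].
Qed.
End Inf.

Section Count.
Variable F : finFieldType.

Lemma fiber_card r (v0 : 'rV[F]_r) : v0 != 0 ->
  #|[set v : 'rV[F]_r | (v != 0) && (<<v>>%MS == <<v0>>%MS)]| = (#|F| - 1)%N.
Proof.
move=> nz.
have -> : [set v : 'rV[F]_r | (v != 0) && (<<v>>%MS == <<v0>>%MS)] =
          [set a *: v0 | a in [set~ (0 : F)]].
  apply/setP => v; rewrite inE; apply/andP/imsetP.
  - case=> hv /eqP /genmxP /andP [h _]; have [a ha] := sub_rVP h.
    exists a => //; rewrite !inE; apply: contra hv => /eqP a0.
    by rewrite ha a0 scale0r.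
  - case=> a; rewrite !inE => ha ->; split.
    + by rewrite scaler_eq0 negb_or ha.
    + by apply/eqP/genmxP/eqmxP; apply: eqmx_scale.
rewrite card_in_imset ?cardsC1 ?subn1 //.
move=> a b _ _ /eqP; rewrite -subr_eq0 -scalerBl scaler_eq0 (negbTE nz) orbF subr_eq0.
by move/eqP.
Qed.

Definition Lset r := [set <<V>>%MS | V : 'M[F]_r & \rank V == 1%N].

Lemma card_lines r : (#|Lset r| * (#|F| - 1) = #|F| ^ r - 1)%N.
Proof.
have hN : #|[set v : 'rV[F]_r | v != 0]| = (#|F| ^ r - 1)%N.
  have -> : [set v : 'rV[F]_r | v != 0] = [set~ 0].
    by apply/setP => v; rewrite !inE.
  by rewrite cardsC1 card_mx mul1n subn1.
rewrite -hN.
transitivity (\sum_(l in Lset r) (#|F| - 1)%N); first by rewrite sum_nat_const.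
rewrite -sum1_card; symmetry.
rewrite (partition_big (fun v : 'rV[F]_r => <<v>>%MS) (mem (Lset r))); last first.
  move=> v; rewrite inE => hv; apply/imsetP; exists (<<v>>%MS); last by rewrite genmx_id.
  by rewrite inE mxrank_gen rank_rV hv.
apply: eq_bigr => l /imsetP [V]; rewrite inE => hV ->.
set v0 := nz_row V.
have nz : v0 != 0.
  rewrite nz_row_eq0; apply: contraTneq hV => ->; by rewrite mxrank0.
have e : <<V>>%MS = <<v0>>%MS.
  apply/esym/genmxP; rewrite -(mxrank_leqif_eq (nz_row_sub V)).2.
  by rewrite rank_rV nz (eqP hV).
rewrite e sum1dep_card -(fiber_card nz); apply: eq_card => v; rewrite !inE.
by [].
Qed.

Lemma ker_sub r (A B : 'M[F]_r) : (A <= B)%MS -> (kermx B^T <= kermx A^T)%MS.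
Proof.
move=> h; rewrite sub_kermx -(mulmxKpV h) trmx_mul mulmxA mulmx_ker mul0mx //.
Qed.

Lemma ker_eqmx r (A B : 'M[F]_r) : (A == B)%MS -> (kermx A^T == kermx B^T)%MS.
Proof. by case/andP => h1 h2; apply/andP; split; apply: ker_sub. Qed.

Lemma perp_perp r (V : 'M[F]_r) : (kermx (kermx V^T)^T == V)%MS.
Proof.
have h : (V <= kermx (kermx V^T)^T)%MS.
  by rewrite sub_kermx -{1}[V]trmxK -trmx_mul mulmx_ker trmx0.
have e : (V == kermx (kermx V^T)^T)%MS.
  rewrite -(mxrank_leqif_eq h).2 eqn_leq mxrankS //=.
  by rewrite !mxrank_ker !mxrank_tr mxrank_ker subKn ?mxrank_tr ?rank_leq_col.
by case/andP: e => e1 e2; apply/andP.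
Qed.

Definition psi r (V : 'M[F]_r) : 'M[F]_r := <<kermx V^T>>%MS.

Lemma psiK r (V : 'M[F]_r) : psi (psi V) = <<V>>%MS.
Proof.
apply/genmxP; apply/eqmxP.
apply: eqmx_trans (eqmxP (perp_perp V)).
apply/eqmxP; apply: ker_eqmx; apply/eqmxP; exact: genmxE.
Qed.

Lemma rank_psi r (V : 'M[F]_r) : \rank (psi V) = (r - \rank V)%N.
Proof. by rewrite mxrank_gen mxrank_ker mxrank_tr. Qed.

Definition Hset r := [set <<V>>%MS | V : 'M[F]_r & \rank V == r.-1].

Lemma card_Hset r : (0 < r)%N -> #|Hset r| = #|Lset r|.
Proof.
move=> r0.
have canH : forall W, W \in Hset r -> <<W>>%MS = W.
  by move=> W /imsetP [V _ ->]; rewrite genmx_id.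
have -> : Lset r = [set psi W | W in Hset r].
  apply/setP => l; apply/imsetP/imsetP.
  - case=> V; rewrite inE => hV ->; exists (psi <<V>>%MS); last by rewrite psiK genmx_id.
    apply/imsetP; exists (kermx (<<V>>%MS)^T) => //.
    by rewrite inE mxrank_ker mxrank_tr mxrank_gen (eqP hV) subn1.
  - case=> W /imsetP [V]; rewrite inE => hV -> ->; exists (kermx (<<V>>%MS)^T) => //.
    rewrite inE mxrank_ker mxrank_tr mxrank_gen (eqP hV).
    by rewrite -subn1 subKn.
rewrite [RHS]card_in_imset //.
move=> W1 W2 h1 h2 e; by rewrite -(canH _ h1) -(canH _ h2) -!psiK e.
Qed.

Definition HypG n (G : 'M[F]_n) :=
  [set <<U>>%MS | U : 'M[F]_n & (U <= G)%MS && (\rank U == (\rank G).-1)].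

Lemma card_HypG n (G : 'M[F]_n) : #|HypG G| = #|Hset (\rank G)|.
Proof.
set B := row_base G.
have fB : row_free B := row_base_free G.
have eB : (B :=: G)%MS := eq_row_base G.
pose phi (V : 'M[F]_(\rank G)) : 'M[F]_n := <<V *m B>>%MS.
have canH : forall W, W \in Hset (\rank G) -> <<W>>%MS = W.
  by move=> W /imsetP [V _ ->]; rewrite genmx_id.
have -> : HypG G = [set phi W | W in Hset (\rank G)].
  apply/setP => l; apply/imsetP/imsetP.
  - case=> U; rewrite inE => /andP [hU hr] ->.
    have hUB : (U <= B)%MS by rewrite eB.
    exists (<<U *m pinvmx B>>%MS).
      apply/imsetP; exists (<<U *m pinvmx B>>%MS); last by rewrite genmx_id.
      by rewrite inE mxrank_gen -(eqP hr) -{2}(mulmxKpV hUB) mxrankMfree.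
    rewrite /phi; apply/genmxP; apply/eqmxP.
    have := eqmxMr B (genmxE (U *m pinvmx B)); rewrite mulmxKpV //; exact: eqmx_sym.
  - case=> W /imsetP [V]; rewrite inE => hV -> ->.
    exists (<<<<V>>%MS *m B>>%MS); last by rewrite genmx_id.
    rewrite inE mxrank_gen mxrankMfree // mxrank_gen (eqP hV) eqxx andbT genmxE.
    by rewrite -eB submxMl.
rewrite [LHS]card_in_imset //.
move=> W1 W2 h1 h2 /genmxP /andP [e1 e2].
rewrite -(canH _ h1) -(canH _ h2); apply/genmxP/andP.
by rewrite -!(submxMfree _ _ fB).
Qed.

Lemma card_HypG_theta n (G : 'M[F]_n) k : \rank G = k.+1 -> #|HypG G| = theta #|F| k.
Proof.
move=> hr; rewrite card_HypG card_Hset hr // /theta -card_lines mulnK //.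
by rewrite subn_gt0 card_finNzRing_gt1.
Qed.
End Count.

Section Geom.
Variables (F : finFieldType) (n : nat).
Local Notation pt := 'rV[F]_n.

Lemma is_affE k (A : {set pt}) : is_aff k A -> exists v U, \rank U = k /\ A = aff v U.
Proof. by []. Qed.

Lemma is_affI k v (U : 'M[F]_n) : \rank U = k -> is_aff k (aff v U).
Proof. by move=> h; exists v, U. Qed.

Lemma sub_rank_eq m1 m2 (A : 'M[F]_(m1, n)) (B : 'M[F]_(m2, n)) :
  (A <= B)%MS -> (\rank B <= \rank A)%N -> (B <= A)%MS.
Proof. by move=> h hr; rewrite -(mxrank_leqif_sup h).2 eqn_leq hr mxrankS. Qed.

Lemma meet_dir j v (U : 'M[F]_n) v' U' :
  is_aff j (aff v U :&: aff v' U') ->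
  exists c, [/\ c \in aff v U, c \in aff v' U' & \rank (U :&: U')%MS = j].
Proof.
case/is_affE => c [E [hE e]].
have hc : c \in aff v U :&: aff v' U' by rewrite e aff_self.
move: (hc); rewrite inE => /andP [h1 h2]; exists c; split => //.
move: e; rewrite (aff_re h1) (aff_re h2) aff_cap => /aff_eq /eqmx_rank ->.
by [].
Qed.

Lemma sub_rank (U : 'M[F]_n) j : (j <= \rank U)%N ->
  exists D : 'M[F]_n, (D <= U)%MS /\ \rank D = j.
Proof.
move=> hj.
exists (<<(pid_mx j : 'M[F]_(j, \rank U)) *m row_base U>>%MS); split.
- by rewrite genmxE; apply: submx_trans (submxMl _ _) _; rewrite eq_row_base.
- by rewrite mxrank_gen mxrankMfree ?row_base_free // rank_pid_mx.
Qed.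


Lemma two_spaces k (S : {set {set pt}}) : (0 < k)%N -> (k < n)%N ->
  (forall s, s \in S -> is_aff k s) -> ~ in_pencil k S ->
  exists s1 s2, [/\ s1 \in S, s2 \in S & s1 != s2].
Proof.
move=> k0 kn hS hP.
case: (set_0Vmem S) => [S0|[s hs]].
  exfalso; apply: hP.
  have hj : (k.-1 <= \rank (scalar_mx 1 : 'M[F]_n))%N.
    by rewrite mxrank1; apply: leq_trans (leq_pred k) (ltnW kn).
  have [D [_ hD]] := sub_rank hj.
  by exists (aff 0 D); split; [exact: is_affI | move=> s; rewrite S0 inE].
case: (boolP [exists s2 in S, s2 != s]).
  by case/exists_inP => s2 h2 ne; exists s2, s; split.
rewrite negb_exists_in => /forall_inP hall.
exfalso; apply: hP.
have [v [U [hU es]]] := is_affE (hS _ hs).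
have hj : (k.-1 <= \rank U)%N by rewrite hU leq_pred.
have [D [hDU hD]] := sub_rank hj.
exists (aff v D); split; first exact: is_affI.
move=> t ht; have := hall t ht; rewrite negbK => /eqP ->.
by rewrite es; apply: aff_subsetW => //; exact: aff_self.
Qed.

Lemma geom k (S : {set {set pt}}) : (0 < k)%N -> (k < n)%N ->
  (forall s, s \in S -> is_aff k s) -> pairwise_meet k S -> ~ in_pencil k S ->
  exists Gam : {set pt}, is_aff k.+1 Gam /\ forall s, s \in S -> s \subset Gam.
Proof.
move=> k0 kn hS hM hP.
have [s1 [s2 [h1 h2 ne12]]] := two_spaces k0 kn hS hP.
have [v1 [U1 [r1 e1]]] := is_affE (hS _ h1).
have [v2 [U2 [r2 e2]]] := is_affE (hS _ h2).
have := hM _ _ h1 h2 ne12; rewrite e1 e2 => /meet_dir [w [w1 w2 rD]].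
rewrite (aff_re w1) in e1; rewrite (aff_re w2) in e2.
set D := (U1 :&: U2)%MS in rD.
set G := (U1 + U2)%MS.
have rG : \rank G = k.+1.
  have := mxrank_sum_cap U1 U2; rewrite r1 r2 -/D rD => h.
  by apply/eqP; rewrite -(eqn_add2r k.-1) h addSn -addnS prednK.
have U1G : (U1 <= G)%MS by exact: addsmxSl.
have U2G : (U2 <= G)%MS by exact: addsmxSr.
have DU1 : (D <= U1)%MS by exact: capmxSl.
have DU2 : (D <= U2)%MS by exact: capmxSr.
exists (aff w G); split; first exact: is_affI.
have hA : forall s3, s3 \in S -> aff w D \subset s3 \/ s3 \subset aff w G.
  move=> s3 h3.
  have [e31|n31] := eqVneq s3 s1.
    by right; rewrite e31 e1; apply: aff_subsetW => //; exact: aff_self.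
  have [e32|n32] := eqVneq s3 s2.
    by right; rewrite e32 e2; apply: aff_subsetW => //; exact: aff_self.
  have [v3 [U3 [r3 e3]]] := is_affE (hS _ h3).
  have := hM _ _ h3 h1 n31; rewrite e3 e1 => /meet_dir [a [a3 a1 rA]].
  have := hM _ _ h3 h2 n32; rewrite e3 e2 => /meet_dir [b [b3 b2 rB]].
  set DA := (U3 :&: U1)%MS in rA; set DB := (U3 :&: U2)%MS in rB.
  set d := a - b.
  move: (a3) (a1) (b3) (b2); rewrite !mem_aff => ha3 ha1 hb3 hb2.
  have hd3 : (d <= U3)%MS.
    by have := subv_sub ha3 hb3; rewrite opprB addrA subrK.
  have hdG : (d <= G)%MS.
    have := subv_sub (submx_trans ha1 U1G) (submx_trans hb2 U2G).
    by rewrite opprB addrA subrK.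
  set X := (DA + DB + d)%MS.
  have DAX : (DA <= X)%MS by exact: submx_trans (addsmxSl DA DB) (addsmxSl _ _).
  have DBX : (DB <= X)%MS by exact: submx_trans (addsmxSr DA DB) (addsmxSl _ _).
  have dX : (d <= X)%MS by exact: addsmxSr.
  have XU3 : (X <= U3)%MS by rewrite /X !addsmx_sub hd3 !capmxSl.
  have XG : (X <= G)%MS.
    rewrite /X !addsmx_sub hdG andbT.
    by rewrite (submx_trans (capmxSr _ _) U1G) (submx_trans (capmxSr _ _) U2G).
  case: (leqP k (\rank X)) => hX.
  - right; rewrite (aff_re a3); apply: aff_subsetW.
      by apply: submx_trans (sub_rank_eq XU3 _) XG; rewrite r3.
    by rewrite mem_aff (submx_trans ha1 U1G).
  - left.
    have XDA : (X <= DA)%MS by apply: sub_rank_eq DAX _; rewrite rA -ltnS prednK.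
    have DBDA : (DB <= DA)%MS by exact: submx_trans DBX XDA.
    have DADB : (DA <= DB)%MS by apply: sub_rank_eq DBDA _; rewrite rA rB.
    have DAD : (DA <= D)%MS by rewrite sub_capmx capmxSr (submx_trans DADB (capmxSr _ _)).
    have DDA : (D <= DA)%MS by apply: sub_rank_eq DAD _; rewrite rA rD.
    have aW : a \in aff w D.
      rewrite mem_aff sub_capmx ha1 /=.
      have -> : a - w = d + (b - w) by rewrite /d addrA subrK.
      apply: addv_sub hb2; apply: submx_trans dX (submx_trans XDA _).
      exact: submx_trans DADB (capmxSr _ _).
    rewrite (aff_re aW) (aff_re a3); apply: aff_subsetW; last exact: aff_self.
    exact: submx_trans DDA (capmxSl _ _).
move=> s3 h3; apply/negPn/negP => n3.
apply: hP; exists (aff w D); split; first exact: is_affI.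
move=> s4 h4.
case: (hA _ h3) => [W3|h]; last by rewrite h in n3.
have [v3 [U3 [r3 e3]]] := is_affE (hS _ h3).
have W3' : aff w D \subset aff v3 U3 by rewrite -e3.
have [DU3 w3] := aff_subset W3'.
rewrite (aff_re w3) in e3.
have U3G : ~~ (U3 <= G)%MS.
  apply: contra n3 => h; rewrite e3; apply: aff_subsetW h _; exact: aff_self.
case: (hA _ h4) => [//|S4].
have [v4 [U4 [r4 e4]]] := is_affE (hS _ h4).
have n34 : s3 != s4 by apply: contraNneq n3 => ->.
have := hM _ _ h3 h4 n34; rewrite e3 e4 => /meet_dir [c [c3 c4 rE]].
rewrite e4 in S4; have [U4G _] := aff_subset S4.
set Y := (U3 :&: G)%MS.
have DY : (D <= Y)%MS by rewrite sub_capmx DU3 (submx_trans DU1 U1G).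
have rY : (\rank Y < k)%N.
  rewrite ltnNge; apply: contra U3G => hk.
  by apply: submx_trans (sub_rank_eq (capmxSl U3 G) _) (capmxSr U3 G); rewrite r3.
have YD : (Y <= D)%MS by apply: sub_rank_eq DY _; rewrite rD -ltnS prednK.
have EY : (U3 :&: U4 <= Y)%MS by rewrite sub_capmx capmxSl (submx_trans (capmxSr _ _) U4G).
have DE : (D <= U3 :&: U4)%MS by apply: sub_rank_eq (submx_trans EY YD) _; rewrite rD rE.
have cG : c \in aff w G by apply: (subsetP S4).
have cW : c \in aff w D.
  move: c3 cG; rewrite !mem_aff => c3 cG; apply: submx_trans YD.
  by rewrite sub_capmx c3 cG.
rewrite (aff_re cW) (aff_re c4); apply: aff_subsetW; last exact: aff_self.
exact: submx_trans DE (capmxSr _ _).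
Qed.

End Geom.

Section Final.
Variables (F : finFieldType) (n : nat).
Local Notation pt := 'rV[F]_n.

Lemma eqmx_refl' (U : 'M[F]_n) : (U == U)%MS.
Proof. by apply/andP; split; exact: submx_refl. Qed.

Lemma aff_eqmx (v : pt) U U' : (U == U')%MS -> aff v U = aff v U'.
Proof. by move=> /eqmxP h; apply/setP => x; rewrite !mem_aff h. Qed.

Definition Tset (G : 'M[F]_n) : {set {set 'M[F]_n}} :=
  [set inf_part (aff (0 : pt) H) | H in HypG G].

Lemma card_Tset (G : 'M[F]_n) k : \rank G = k.+1 -> #|Tset G| = theta #|F| k.
Proof.
move=> hr; rewrite -(card_HypG_theta hr) card_in_imset //.
move=> H1 H2 /imsetP [U1 _ ->] /imsetP [U2 _ ->] /eqP.
by rewrite inf_part_eqE => /genmxP; rewrite !genmx_id.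
Qed.

Lemma hyp_inf k (g : pt) (G : 'M[F]_n) (s : {set pt}) :
  \rank G = k.+1 -> is_aff k s -> s \subset aff g G -> inf_part s \in Tset G.
Proof.
move=> hr /is_affE [v [U [hU ->]]] /aff_subset [UG _].
apply/imsetP; exists (<<U>>%MS).
  by apply/imsetP; exists U => //; rewrite inE UG hU hr eqxx.
apply: inf_part_eqmx; apply/eqmxP; apply: eqmx_sym; exact: genmxE.
Qed.

Lemma inj_S k (S : {set {set pt}}) :
  (forall s, s \in S -> is_aff k s) -> pairwise_meet k S ->
  {in S &, injective (@inf_part F n)}.
Proof.
move=> hS hM s1 s2 h1 h2 e; apply/eqP; apply/negPn/negP => ne.
have [v1 [U1 [_ e1]]] := is_affE (hS _ h1).
have [v2 [U2 [_ e2]]] := is_affE (hS _ h2).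
have := hM _ _ h1 h2 ne; rewrite e1 e2 => /meet_dir [c [c1 c2 _]].
move: e ne; rewrite e1 e2 => /eqP; rewrite inf_part_eqE => hU.
by rewrite (aff_re c1) (aff_re c2) (aff_eqmx _ hU) eqxx.
Qed.

End Final.

Theorem mainTheorem2 (F : finFieldType) (n k : nat) (S : {set {set 'rV[F]_n}}) :
  (0 < k)%N -> (k < n)%N ->
  (forall s, s \in S -> is_aff k s) ->
  pairwise_meet k S ->
  ~ in_pencil k S ->
  [/\ (#|S| <= theta #|F| k)%N,
      (#|S| = theta #|F| k) <->
        (exists Gam : {set 'rV[F]_n}, is_aff k.+1 Gam /\ max_distinct_inf k Gam S)
    & exists Gam : {set 'rV[F]_n}, is_aff k.+1 Gam /\ forall s, s \in S -> s \subset Gam].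
Proof.
move=> k0 kn hS hM hP.
have [Gam [hG hGS]] := geom k0 kn hS hM hP.
have [g [G [rG eG]]] := is_affE hG.
have inj := inj_S hS hM.
have cardS : #|S| = #|[set inf_part s | s in S]| by rewrite card_in_imset.
have subT : [set inf_part s | s in S] \subset Tset G.
  apply/subsetP => X /imsetP [s hs ->]; apply: (@hyp_inf _ _ k g) rG (hS _ hs) _.
  by rewrite -eG; exact: hGS.
split.
- by rewrite cardS -(card_Tset rG); exact: subset_leq_card.
- split.
  + move=> hc; exists Gam; split => //; split.
    * by move=> s hs; split; [exact: hS | exact: hGS].
    * by move=> s1 s2 h1 h2 ne; apply: contra ne => /eqP e; apply/eqP; exact: inj.
    * move=> t ht tG tS.
      have : [set inf_part s | s in S] == Tset G.
        by rewrite eqEcard subT /= (card_Tset rG) -hc cardS.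
      move/eqP => eT.
      have : inf_part t \in Tset G by apply: (@hyp_inf _ _ k g) rG ht _; rewrite -eG.
      by rewrite -eT => /imsetP [s hs ->]; exists s.
  + case=> Gam' [hG' [h1 h2 h3]].
    have [g' [G' [rG' eG']]] := is_affE hG'.
    rewrite cardS -(card_Tset rG'); apply/eqP; rewrite eqn_leq.
    rewrite subset_leq_card /=; last first.
      apply/subsetP => X /imsetP [s hs ->]; have [hs1 hs2] := h1 _ hs.
      by apply: (@hyp_inf _ _ k g') rG' hs1 _; rewrite -eG'.
    apply: subset_leq_card; apply/subsetP => X /imsetP [H /imsetP [U]].
    rewrite inE => /andP [UG hU] -> ->.
    have ht : is_aff k (aff g' <<U>>%MS) by apply: is_affI; rewrite mxrank_gen (eqP hU) rG'.
    have tG : aff g' <<U>>%MS \subset Gam'.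
      by rewrite eG'; apply: aff_subsetW; [rewrite genmxE | exact: aff_self].
    have -> : inf_part (aff 0 <<U>>%MS) = inf_part (aff g' <<U>>%MS).
      exact: inf_part_eqmx (eqmx_refl' _).
    case: (boolP (aff g' <<U>>%MS \in S)) => tS; first by apply/imsetP; exists (aff g' <<U>>%MS).
    have [s hs e] := h3 _ ht tG tS.
    by apply/imsetP; exists s => //; rewrite e.
- by exists Gam.
Qed.
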